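(* Let $(R,[\cdot_\lambda\cdot])$ be a Lie conformal superalgebra and let $\alpha,\beta:R\to R$ be two even, commuting linear maps such that $\alpha\partial=\partial\alpha$, $\beta\partial=\partial\beta$, $\alpha([a_\lambda b])=[\alpha(a)_\lambda\alpha(b)]$ and $\beta([a_\lambda b])=[\beta(a)_\lambda\beta(b)]$ for all $a,b\in R$. Define a $\mathbb{C}$-linear map $R\otimes R\to R[\lambda]$ by $[a_\lambda b]'=[\alpha(a)_\lambda\beta(b)]$. Then $(R,[\cdot_\lambda\cdot]',\alpha,\beta)$ is a BiHom-Lie conformal superalgebra.
   Context: All spaces are over $\mathbb{C}$. For a $\mathbb{C}[\partial]$-module $V$, $V[\lambda]=\mathbb{C}[\lambda]\otimes V$. In a $\mathbb{Z}_2$-graded space, $|a|$ denotes the parity of a homogeneous element; identities involving $|a|$ are required for homogeneous elements. In an expression $[x_{-\lambda-\partial}y]$ one writes $[x_\lambda y]=\sum_n\lambda^n c_n$ and replaces $\lambda$ by $-\lambda-\partial$, with $\partial$ acting on the coefficients $c_n$. A Lie conformal superalgebra is a $\mathbb{Z}_2$-graded $\mathbb{C}[\partial]$-module $R=R_0\oplus R_1$ with a $\mathbb{C}$-linear map $R\otimes R\to R[\lambda]$, $a\otimes b\mapsto[a_\lambda b]$, with $[R_{i\,\lambda}R_j]\subseteq R_{i+j}[\lambda]$, satisfying $[(\partial a)_\lambda b]=-\lambda[a_\lambda b]$, $[a_\lambda(\partial b)]=(\partial+\lambda)[a_\lambda b]$, $[a_\lambda b]=-(-1)^{|a||b|}[b_{-\partial-\lambda}a]$,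 and $[a_\lambda[b_\mu c]]=[[a_\lambda b]_{\lambda+\mu}c]+(-1)^{|a||b|}[b_\mu[a_\lambda c]]$. A BiHom-Lie conformal superalgebra $(R,[\cdot_\lambda\cdot],\alpha,\beta)$ is a $\mathbb{Z}_2$-graded $\mathbb{C}[\partial]$-module $R=R_0\oplus R_1$ with two commuting linear maps $\alpha,\beta:R\to R$ and a $\mathbb{C}$-linear map $R\otimes R\to R[\lambda]$, $a\otimes b\mapsto[a_\lambda b]$, with $[R_{i\,\lambda}R_j]\subseteq R_{i+j}[\lambda]$ ($i,j\in\mathbb{Z}_2$), such that for all homogeneous $a,b,c\in R$: (1) $\alpha\partial=\partial\alpha$, $\beta\partial=\partial\beta$; (2) $\alpha([a_\lambda b])=[\alpha(a)_\lambda\alpha(b)]$, $\beta([a_\lambda b])=[\beta(a)_\lambda\beta(b)]$; (3) $[(\partial a)_\lambda b]=-\lambda[a_\lambda b]$, $[a_\lambda(\partial b)]=(\partial+\lambda)[a_\lambda b]$; (4) $[\beta(a)_\lambda\alpha(b)]=-(-1)^{|a||b|}[\beta(b)_{-\lambda-\partial}\alpha(a)]$; (5) $[\alpha\beta(a)_\lambda[b_\mu c]]=[[\beta(a)_\lambda b]_{\lambda+\mu}\beta(c)]+(-1)^{|a||b|}[\beta(b)_\mu[\alpha(a)_\lambda c]]$. *)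

(* Defs.v *)
From mathcomp Require Import all_boot all_algebra.
From mathcomp Require Import complex Rstruct.
Set Implicit Arguments. Unset Strict Implicit. Unset Printing Implicit Defensive.
Import GRing.Theory.
Local Open Scope ring_scope.

Definition CC : fieldType := (Rdefinitions.R)[i].

Section ConfDefs.
Variables (K : fieldType) (V : lmodType K).

(* An element of V[lambda] = C[lambda] (x) V is represented by its list of
   coefficients p = [:: p_0; p_1; ...], meaning sum_n lambda^n p_n.
   Trailing zeros are irrelevant: all statements go through [lcoef]. *)
Definition lcoef (p : seq V) (n : nat) : V := nth 0 p n.

(* coefficient of lambda^n in  lambda * p *)
Definition lam_mul (p : seq V) (n : nat) : V :=
  if n is n'.+1 then lcoef p n' else 0.

(* coefficient of lambda^k in  p(-lambda-d) = sum_n (-lambda-d)^n p_n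
   = sum_n (-1)^n sum_k C(n,k) lambda^k d^(n-k) p_n  *)
Definition subst_opp (d : V -> V) (p : seq V) (k : nat) : V :=
  \sum_(0 <= n < size p) (((-1) ^+ n * ('C(n, k))%:R) *: iter (n - k) d (lcoef p n)).

(* sign (-1)^{|a||b|} for parities i j *)
Definition psign (i j : bool) : K := (-1) ^+ (i && j).

(* Two-variable expressions: value at (n, m) = coefficient of lambda^n mu^m. *)
(* [x_lambda [y_mu z]] *)
Definition jac_in (br : V -> V -> seq V) (x y z : V) (n m : nat) : V :=
  lcoef (br x (lcoef (br y z) m)) n.
(* [[x_lambda y]_{lambda+mu} z] = sum_k lambda^k [ (x_(k))_{lambda+mu} z ],
   where [x_lambda y] = sum_k lambda^k e_k, and
   (lambda+mu)^j = sum_i C(j,i) lambda^i mu^(j-i). *)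
Definition jac_out (br : V -> V -> seq V) (x y z : V) (n m : nat) : V :=
  \sum_(0 <= k < n.+1)
     (('C(n - k + m, m))%:R *: lcoef (br (lcoef (br x y) k) z) (n - k + m)).
(* [y_mu [x_lambda z]] *)
Definition jac_swap (br : V -> V -> seq V) (y x z : V) (n m : nat) : V :=
  lcoef (br y (lcoef (br x z) n)) m.

(* Z2-graded C[d]-module: V = G false (+) G true, both d-stable subspaces *)
Definition graded_dmodule (d : {linear V -> V}) (G : bool -> pred V) : Prop :=
  [/\ (forall i, G i 0),
      (forall i u v, G i u -> G i v -> G i (u + v)),
      (forall i (k : K) v, G i v -> G i (k *: v)),
      (forall v, exists v0 v1, [/\ G false v0, G true v1 & v = v0 + v1])
    & (forall v, G false v -> G true v -> v = 0) /\
      (forall i v, G i v -> G i (d v))].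

Definition bracket_bilinear (br : V -> V -> seq V) : Prop :=
  (forall n (k : K) a a' b,
      lcoef (br (k *: a + a') b) n = k *: lcoef (br a b) n + lcoef (br a' b) n) /\
  (forall n (k : K) a b b',
      lcoef (br a (k *: b + b')) n = k *: lcoef (br a b) n + lcoef (br a b') n).

Definition bracket_graded (G : bool -> pred V) (br : V -> V -> seq V) : Prop :=
  forall i j a b n, G i a -> G j b -> G (addb i j) (lcoef (br a b) n).

Definition is_LCSA (d : {linear V -> V}) (G : bool -> pred V)
    (br : V -> V -> seq V) : Prop :=
  [/\ graded_dmodule d G /\ bracket_bilinear br /\ bracket_graded G br,
      (forall a b n, lcoef (br (d a) b) n = - lam_mul (br a b) n),
      (forall a b n, lcoef (br a (d b)) n = d (lcoef (br a b) n) + lam_mul (br a b) n),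
      (forall i j a b n, G i a -> G j b ->
          lcoef (br a b) n = - (psign i j *: subst_opp d (br b a) n))
    &
      (forall i j k a b c n m, G i a -> G j b -> G k c ->
          jac_in br a b c n m = jac_out br a b c n m + psign i j *: jac_swap br b a c n m)].

Definition is_BiHomLCSA (d : {linear V -> V}) (G : bool -> pred V)
    (br : V -> V -> seq V) (alpha beta : {linear V -> V}) : Prop :=
  [/\ graded_dmodule d G, bracket_bilinear br, bracket_graded G br,
      (forall v, alpha (beta v) = beta (alpha v))
    & forall i j k a b c, G i a -> G j b -> G k c ->
      [/\
          alpha (d a) = d (alpha a) /\ beta (d a) = d (beta a),
          (forall n, alpha (lcoef (br a b) n) = lcoef (br (alpha a) (alpha b)) n) /\
          (forall n, beta (lcoef (br a b) n) = lcoef (br (beta a) (beta b)) n),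
          (forall n, lcoef (br (d a) b) n = - lam_mul (br a b) n) /\
          (forall n, lcoef (br a (d b)) n = d (lcoef (br a b) n) + lam_mul (br a b) n),
          (forall n, lcoef (br (beta a) (alpha b)) n
                     = - (psign i j *: subst_opp d (br (beta b) (alpha a)) n))
        &
          (forall n m, jac_in br (alpha (beta a)) b c n m
              = jac_out br (beta a) b (beta c) n m
                + psign i j *: jac_swap br (beta b) (alpha a) c n m)]].

End ConfDefs.

(* Main.v *)
Require Import Defs.
From mathcomp Require Import all_boot all_algebra.
From mathcomp Require Import complex Rstruct.
Local Open Scope ring_scope.
Import GRing.Theory.

Theorem mainTheorem1 (V : lmodType CC) (d : {linear V -> V})
    (G : bool -> pred V) (br : V -> V -> seq V) (alpha beta : {linear V -> V}) :
  is_LCSA d G br ->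
  (* alpha, beta even *)
  (forall i v, G i v -> G i (alpha v)) ->
  (forall i v, G i v -> G i (beta v)) ->
  (* commuting *)
  (forall v, alpha (beta v) = beta (alpha v)) ->
  (forall v, alpha (d v) = d (alpha v)) ->
  (forall v, beta (d v) = d (beta v)) ->
  (forall a b n, alpha (lcoef (br a b) n) = lcoef (br (alpha a) (alpha b)) n) ->
  (forall a b n, beta (lcoef (br a b) n) = lcoef (br (beta a) (beta b)) n) ->
  is_BiHomLCSA d G (fun a b => br (alpha a) (beta b)) alpha beta.
Proof.
move=> [[Hg [[Bl Br] Bg]] D1 D2 Sk Jac] GA GB hc hAd hBd hA hB.
split=> //.
- split=> n k a a' b /=; first by rewrite linearP Bl.
  by rewrite linearP Br.
- by move=> i j a b n Ha Hb; apply: Bg; [apply: GA | apply: GB].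
move=> i j k a b c Ha Hb Hc; split.
- by [].
- split=> n /=; first by rewrite hA hc.
  by rewrite hB hc.
- split=> n /=; first by rewrite hAd D1.
  by rewrite hBd D2.
- move=> n /=.
  rewrite -(hc b) -(hc a).
  exact: Sk i j _ _ n (GA _ _ (GB _ _ Ha)) (GA _ _ (GB _ _ Hb)).
- move=> n m.
  have Ga : G i (alpha (alpha (beta a))) by exact: GA _ _ (GA _ _ (GB _ _ Ha)).
  have Gb : G j (alpha (beta b)) by exact: GA _ _ (GB _ _ Hb).
  have Gc : G k (beta (beta c)) by exact: GB _ _ (GB _ _ Hc).
  have J := Jac i j k _ _ _ n m Ga Gb Gc.
  have E1 : jac_in (fun a0 b0 : V => br (alpha a0) (beta b0)) (alpha (beta a)) b c n m
      = jac_in br (alpha (alpha (beta a))) (alpha (beta b)) (beta (beta c)) n m.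
    by rewrite /jac_in hB (hc b).
  have E2 : jac_out (fun a0 b0 : V => br (alpha a0) (beta b0)) (beta a) b (beta c) n m
      = jac_out br (alpha (alpha (beta a))) (alpha (beta b)) (beta (beta c)) n m.
    rewrite /jac_out; apply: eq_bigr => l _.
    by rewrite hA.
  have E3 : jac_swap (fun a0 b0 : V => br (alpha a0) (beta b0)) (beta b) (alpha a) c n m
      = jac_swap br (alpha (beta b)) (alpha (alpha (beta a))) (beta (beta c)) n m.
    by rewrite /jac_swap hB (hc a) (hc (alpha a)).
  rewrite E1 E2 E3. exact: J.
Qed.
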